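(* Consider the second order operator $\mathcal{L}$ on functions of $(x,y)\in\mathbb{R}^2$, with $Z=x+iy$, whose carré du champ $\Gamma$ and action on coordinates are given (using complex notation, with $\Gamma$ complex bilinear and $\mathcal{L}$ complex linear) by $$\Gamma(Z,Z)=\bar Z-Z^2,\quad \Gamma(\bar Z,\bar Z)=Z-\bar Z^2,\quad \Gamma(Z,\bar Z)=\tfrac12(1-Z\bar Z),\quad \mathcal{L}(Z)=-Z,\quad \mathcal{L}(\bar Z)=-\bar Z.$$ Let $D(Z,\bar Z)=\Gamma(Z,\bar Z)^2-\Gamma(Z,Z)\Gamma(\bar Z,\bar Z)=\tfrac14(1-Z\bar Z)^2-(\bar Z-Z^2)(Z-\bar Z^2)$. Let $\Omega_D$ be the deltoid domain (the bounded open region of $\mathbb{C}$ enclosed by the deltoid curve). Then: (1) $D(Z,\bar Z)>0$ on $\Omega_D$; (2) $\{D(Z,\bar Z)=0\}$ is the deltoid curve, i.e. the boundary of $\Omega_D$; (3) the reversible measure of $\mathcal{L}$ on $\Omega_D$ has density (up to a multiplicative constant) $D(Z,\bar Z)^{-1/2}$ with respect to Lebesgue measure $dx\,dy$, i.e. with $\rho=D^{-1/2}$ one has $\mathcal{L}f=\rho^{-1}\sum_{i,j}\partial_i(\rho\, g^{ij}\partial_j f)$ on $\Omega_D$, where $(g^{ij})$ is the matrix $\Gamma(x_i,x_j)$ in the real coordinates $(x_1,x_2)=(x,y)$; (4) if $z\in\mathbb{R}^2$, $z_k=e^{i\,u_k\cdot z}$ ($k=1,2,3$) with $u_1=(1,0)$,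 $u_2=(-\tfrac12,\tfrac{\sqrt3}2)$, $u_3=(-\tfrac12,-\tfrac{\sqrt3}2)$, and $Z=\frac13(z_1+z_2+z_3)$, then $$D(Z,\bar Z)=-\frac{(z_1-z_2)^2(z_2-z_3)^2(z_3-z_1)^2}{2^2\,3^3}.$$
   Context: The deltoid (Steiner hypocycloid) curve relevant here is the hypocycloid with cusps at the three cube roots of unity $1,j,\bar j$, parametrized by $t\mapsto \frac13(2e^{it}+e^{-2it})$, $t\in[0,2\pi]$; $\Omega_D$ is the bounded open region it encloses, which is the interior of the image of $\mathbb{R}^2$ under the map $z\mapsto \frac13\sum_k e^{i u_k\cdot z}$. Real and complex conventions: $\Gamma(Z,Z)=\Gamma(x,x)-\Gamma(y,y)+2i\Gamma(x,y)$, $\Gamma(Z,\bar Z)=\Gamma(x,x)+\Gamma(y,y)$, $\mathcal{L}(Z)=\mathcal{L}(x)+i\mathcal{L}(y)$. *)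

(* Defs.v *)
From Stdlib Require Import Reals.
From Coquelicot Require Import Coquelicot.
Open Scope R_scope.

Definition Cexpi (t : R) : Complex.C := (cos t, sin t).

Definition GammaZZ (Z : Complex.C) : Complex.C := (Cconj Z - Z * Z)%C.
Definition GammaZbZb (Z : Complex.C) : Complex.C := (Z - Cconj Z * Cconj Z)%C.
Definition GammaZZb (Z : Complex.C) : Complex.C := (/ 2 * (1 - Z * Cconj Z))%C.
Definition LZ (Z : Complex.C) : Complex.C := (- Z)%C.

Definition Dc (Z : Complex.C) : Complex.C :=
  (GammaZZb Z * GammaZZb Z - GammaZZ Z * GammaZbZb Z)%C.

(* Real coefficients, via Gamma(Z,Z) = G(x,x) - G(y,y) + 2i G(x,y),
   Gamma(Z,Zbar) = G(x,x) + G(y,y), L(Z) = L(x) + i L(y). *)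
Definition g11 (x y : R) : R := (Re (GammaZZ (x, y)) + Re (GammaZZb (x, y))) / 2.
Definition g22 (x y : R) : R := (Re (GammaZZb (x, y)) - Re (GammaZZ (x, y))) / 2.
Definition g12 (x y : R) : R := Im (GammaZZ (x, y)) / 2.
Definition b1 (x y : R) : R := Re (LZ (x, y)).
Definition b2 (x y : R) : R := Im (LZ (x, y)).

Definition dx (F : R -> R -> R) (x y : R) : R := Derive (fun t => F t y) x.
Definition dy (F : R -> R -> R) (x y : R) : R := Derive (fun t => F x t) y.

(* The diffusion operator: L f = sum_ij Gamma(x_i,x_j) d_i d_j f + sum_i L(x_i) d_i f *)
Definition Lop (f : R -> R -> R) (x y : R) : R :=
  g11 x y * dx (dx f) x y + g12 x y * dx (dy f) x y
  + g12 x y * dy (dx f) x y + g22 x y * dy (dy f) x y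
  + b1 x y * dx f x y + b2 x y * dy f x y.

Definition rho (x y : R) : R := / sqrt (Re (Dc (x, y))).

Definition divform (f : R -> R -> R) (x y : R) : R :=
  / rho x y *
  (dx (fun a b => rho a b * (g11 a b * dx f a b + g12 a b * dy f a b)) x y
 + dy (fun a b => rho a b * (g12 a b * dx f a b + g22 a b * dy f a b)) x y).

Definition u1 : R * R := (1, 0).
Definition u2 : R * R := (- / 2, sqrt 3 / 2).
Definition u3 : R * R := (- / 2, - (sqrt 3 / 2)).
Definition dot (u : R * R) (a b : R) : R := fst u * a + snd u * b.
Definition zk (u : R * R) (a b : R) : Complex.C := Cexpi (dot u a b).
Definition Zmap (a b : R) : Complex.C :=
  (/ 3 * (zk u1 a b + zk u2 a b + zk u3 a b))%C.

(* Deltoid domain: interior of the image of R^2 under Zmap. *)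
Definition in_image (w : Complex.C) : Prop := exists a b : R, Zmap a b = w.
Definition OmegaD (w : Complex.C) : Prop :=
  exists eps : R, 0 < eps /\ forall w', Cmod (w' - w)%C < eps -> in_image w'.

Definition deltoid (w : Complex.C) : Prop :=
  exists t : R, 0 <= t <= 2 * PI /\ w = (/ 3 * (2 * Cexpi t + Cexpi (-2 * t)))%C.

Definition boundary_OmegaD (w : Complex.C) : Prop :=
  (forall eps : R, 0 < eps -> exists w', OmegaD w' /\ Cmod (w' - w)%C < eps)
  /\ ~ OmegaD w.

(* Main.v *)
Require Import Defs.
From Stdlib Require Import Reals Lra Psatz.
From Coquelicot Require Import Coquelicot.
Open Scope R_scope.

Ltac cunf := unfold Cdiv, Cminus, Cmult, Cplus, Copp, Cconj, Cinv, RtoC; simpl.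

Lemma C_eta (z : C) : z = (fst z, snd z).
Proof. destruct z; reflexivity. Qed.

Lemma Cexpi_add a b : Cexpi (a+b) = (Cexpi a * Cexpi b)%C.
Proof. unfold Cexpi; cunf. rewrite cos_plus, sin_plus. f_equal; ring. Qed.

Lemma Cexpi_nz a : Cexpi a <> 0%C.
Proof. unfold Cexpi. intro H. injection H. intros H1 H2.
  pose proof (sin2_cos2 a). unfold Rsqr in *. rewrite H1, H2 in *. lra. Qed.

Lemma Cexpi_neg a : Cexpi (-a) = (/ Cexpi a)%C.
Proof. unfold Cexpi; cunf. rewrite cos_neg, sin_neg.
  assert (H : cos a * (cos a * 1) + sin a * (sin a * 1) = 1).
  { pose proof (sin2_cos2 a). unfold Rsqr in *. lra. }
  rewrite H. f_equal; field. Qed.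

Lemma Cexpi_0 : Cexpi 0 = 1%C.
Proof. unfold Cexpi. rewrite cos_0, sin_0. reflexivity. Qed.

Lemma Cconj_expi a : Cconj (Cexpi a) = (/ Cexpi a)%C.
Proof. rewrite <- Cexpi_neg. unfold Cexpi, Cconj; simpl. rewrite cos_neg, sin_neg. reflexivity. Qed.

Lemma Cconj_plus' (a b : C) : Cconj (a + b) = (Cconj a + Cconj b)%C.
Proof. destruct a, b; cunf. f_equal; ring. Qed.
Lemma Cconj_minus' (a b : C) : Cconj (a - b) = (Cconj a - Cconj b)%C.
Proof. destruct a, b; cunf. f_equal; ring. Qed.
Lemma Cconj_mult' (a b : C) : Cconj (a * b) = (Cconj a * Cconj b)%C.
Proof. destruct a, b; cunf. f_equal; ring. Qed.
Lemma Cconj_R (r : R) : Cconj (RtoC r) = RtoC r.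
Proof. cunf. f_equal; ring. Qed.

Lemma RtoC_cos a : RtoC (cos a) = ((Cexpi a + / Cexpi a) / 2)%C.
Proof. rewrite <- Cexpi_neg. unfold Cexpi. rewrite cos_neg, sin_neg. unfold RtoC. cunf. f_equal; field. Qed.


Lemma Cconj_inv' (a : C) : Cconj (/ a) = (/ Cconj a)%C.
Proof. destruct a as [a b]; cunf. unfold Rdiv.
  replace (- b * (- b * 1)) with (b * (b * 1)) by ring. f_equal; ring. Qed.

Lemma RtoC_cos3 a : RtoC (cos (3*a)) =
  ((Cexpi a * Cexpi a * Cexpi a + / (Cexpi a * Cexpi a * Cexpi a)) / 2)%C.
Proof. rewrite RtoC_cos. replace (3*a) with (a + a + a) by ring.
  rewrite !Cexpi_add. reflexivity. Qed.

Ltac conjs := repeat (rewrite ?Cconj_plus', ?Cconj_minus', ?Cconj_mult', ?Cconj_inv', ?Cconj_R, ?Cconj_expi).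

Definition Wpt (p c : R) : C := (/ 3 * (Cexpi p * Cexpi p + 2 * RtoC c / Cexpi p))%C.

Definition KD (p c : R) : R := 4 / 27 * ((cos (3*p) - c) * (cos (3*p) - c)) * (1 - c*c).

Lemma KD_C p c : RtoC (KD p c) =
  (4 / 27 * ((RtoC (cos (3*p)) - c) * (RtoC (cos (3*p)) - c)) * (1 - c * c))%C.
Proof. unfold KD, Rdiv. rewrite !RtoC_mult, !RtoC_minus, !RtoC_mult, RtoC_inv by lra. reflexivity. Qed.

Lemma K_C p c : Dc (Wpt p c) = RtoC (KD p c).
Proof.
  rewrite KD_C, RtoC_cos3. unfold Dc, GammaZZb, GammaZZ, GammaZbZb, Wpt.
  unfold Cdiv. conjs.
  pose proof (Cexpi_nz p).
  field. auto.
Qed.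

Lemma Zmap_gen a b : Zmap a b = Wpt (a/2) (cos (sqrt 3 / 2 * b)).
Proof.
  unfold Zmap, zk, dot, u1, u2, u3, Wpt; simpl.
  replace (1 * a + 0 * b) with (a/2 + a/2) by field.
  replace (- / 2 * a + sqrt 3 / 2 * b) with (sqrt 3 / 2 * b + - (a/2)) by field.
  replace (- / 2 * a + - (sqrt 3 / 2) * b) with (- (sqrt 3 / 2 * b) + - (a/2)) by field.
  rewrite !Cexpi_add, !Cexpi_neg, RtoC_cos.
  pose proof (Cexpi_nz (a/2)). pose proof (Cexpi_nz (sqrt 3 / 2 * b)).
  field. auto.
Qed.

Lemma KD_nonneg p c : -1 <= c <= 1 -> 0 <= KD p c.
Proof. intros. unfold KD. apply Rmult_le_pos. apply Rmult_le_pos. lra. apply Rle_0_sqr. nra. Qed.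

Lemma image_D a b : exists p c, -1 <= c <= 1 /\ Zmap a b = Wpt p c.
Proof. exists (a/2), (cos (sqrt 3 / 2 * b)). split. apply COS_bound. apply Zmap_gen. Qed.

Definition gR (x y p : R) : R :=
  (3*x - cos p * cos p + sin p * sin p) * sin p + (3*y - 2 * cos p * sin p) * cos p.

Lemma gR_cont x y : continuity (gR x y).
Proof. unfold gR. reg. Qed.

Lemma gR_Im (Z : C) p : gR (fst Z) (snd Z) p = Im ((3 * Z - Cexpi p * Cexpi p) * Cexpi p)%C.
Proof. destruct Z as [x y]. unfold gR, Cexpi. cunf. ring. Qed.

Lemma find_root x y : exists p, 0 <= p <= PI /\ gR x y p = 0.
Proof.
  pose proof PI_RGT_0.
  destruct (Rtotal_order y 0) as [Hy|[Hy|Hy]].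
  - destruct (IVT (gR x y) 0 PI (gR_cont x y)) as [p [H1 H2]]; try lra.
    + unfold gR. rewrite sin_0, cos_0. lra.
    + unfold gR. rewrite sin_PI, cos_PI. lra.
    + exists p; auto.
  - exists 0. split. lra. unfold gR. rewrite sin_0, cos_0, Hy. ring.
  - destruct (IVT (fun p => - gR x y p) 0 PI) as [p [H1 H2]]; try lra.
    + apply continuity_opp, gR_cont.
    + unfold gR. rewrite sin_0, cos_0. lra.
    + unfold gR. rewrite sin_PI, cos_PI. lra.
    + exists p; split; auto. lra.
Qed.

Lemma surj (Z : C) : 0 <= Re (Dc Z) ->
  exists p c, 0 <= p <= PI /\ -1 <= c <= 1 /\ Z = Wpt p c.
Proof.
  intro HD.
  destruct (find_root (fst Z) (snd Z)) as [p [Hp Hg]].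
  set (u := Cexpi p).
  set (w := ((3 * Z - u * u) * u)%C).
  set (c := Re w / 2).
  assert (Hw : w = RtoC (2 * c)).
  { rewrite (C_eta w). unfold c. rewrite gR_Im in Hg. fold u w in Hg.
    unfold RtoC. f_equal. unfold Re. field. exact Hg. }
  assert (HZ : Z = Wpt p c).
  { unfold Wpt. fold u. rewrite RtoC_mult in Hw. rewrite <- Hw. unfold w.
    pose proof (Cexpi_nz p). fold u in H. field. auto. }
  exists p, c. split; [auto|]. split; [|auto].
  rewrite HZ, K_C in HD. simpl in HD. unfold KD in HD.
  pose proof (COS_bound (3*p)).
  destruct (Req_dec (cos (3*p)) c) as [E|E].
  - rewrite <- E. auto.
  - assert (0 < (cos (3*p) - c) * (cos (3*p) - c)).
    { apply Rsqr_pos_lt. lra. }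
    assert (0 <= 1 - c*c).
    { apply (Rmult_le_reg_l (4/27 * ((cos (3*p) - c) * (cos (3*p) - c)))). 
      apply Rmult_lt_0_compat; lra. lra. }
    nra.
Qed.

Lemma Wpt_image p c : -1 <= c <= 1 -> in_image (Wpt p c).
Proof.
  intros Hc. exists (2*p), (2 * acos c / sqrt 3).
  rewrite Zmap_gen.
  assert (sqrt 3 <> 0). { apply Rgt_not_eq, sqrt_lt_R0. lra. }
  replace (2*p/2) with p by field.
  replace (sqrt 3 / 2 * (2 * acos c / sqrt 3)) with (acos c) by (field; auto).
  rewrite cos_acos; auto.
Qed.

Lemma deltoid_alt Z : deltoid Z <->
  exists t, 0 <= t <= 2 * PI /\ Z = (/ 3 * (2 * Cexpi t + / (Cexpi t * Cexpi t)))%C.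
Proof.
  unfold deltoid. split; intros [t [Ht HZ]]; exists t; split; auto; rewrite HZ;
  replace (-2 * t) with (- (t + t)) by ring; rewrite Cexpi_neg, Cexpi_add; reflexivity.
Qed.

Lemma Cexpi_2PI : Cexpi (2 * PI) = 1%C.
Proof. unfold Cexpi. rewrite cos_2PI, sin_2PI. reflexivity. Qed.
Lemma Cexpi_PI : Cexpi PI = (- 1)%C.
Proof. unfold Cexpi. rewrite cos_PI, sin_PI. cunf. f_equal; ring. Qed.

Lemma deltoid_Wpt t : (/ 3 * (2 * Cexpi t + / (Cexpi t * Cexpi t)))%C = Wpt (-t) 1.
Proof. unfold Wpt. rewrite Cexpi_neg. pose proof (Cexpi_nz t). field. auto. Qed.

Lemma KD_1 p : KD p 1 = 0.
Proof. unfold KD. ring. Qed.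

Lemma RtoC_inj' (a b : R) : RtoC a = RtoC b -> a = b.
Proof. unfold RtoC. intro H. injection H. auto. Qed.

Lemma D0_iff Z : Dc Z = RtoC 0 <-> deltoid Z.
Proof.
  split.
  - intro H0.
    destruct (surj Z) as [p [c [Hp [Hc HZ]]]].
    { rewrite H0. simpl. lra. }
    rewrite HZ, K_C in H0. apply RtoC_inj' in H0.
    unfold KD in H0.
    assert (Hcase : c = 1 \/ c = -1 \/ c = cos (3*p)).
    { assert (A : (cos (3*p) - c) * (cos (3*p) - c) = 0 \/ 1 - c*c = 0).
      { apply Rmult_integral in H0. destruct H0 as [H0|H0]; [left|right; auto].
        apply Rmult_integral in H0. destruct H0; [lra|auto]. }
      destruct A as [A|A].
      - apply Rmult_integral in A. right; right. destruct A; lra.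
      - assert ((c - 1) * (c + 1) = 0) by lra. apply Rmult_integral in H. lra. }
    pose proof PI_RGT_0.
    pose proof (Cexpi_nz p).
    apply deltoid_alt. rewrite HZ. unfold Wpt.
    destruct Hcase as [E|[E|E]]; rewrite E.
    + exists (2*PI - p). split. lra.
      replace (2*PI - p) with (2*PI + - p) by ring.
      rewrite Cexpi_add, Cexpi_2PI, Cexpi_neg. field. auto.
    + exists (PI - p). split. lra.
      replace (PI - p) with (PI + - p) by ring.
      rewrite Cexpi_add, Cexpi_PI, Cexpi_neg. field. auto.
    + exists (2*p). split. lra.
      replace (2*p) with (p + p) by ring.
      rewrite Cexpi_add, RtoC_cos3. field. auto.
  - intro H. apply deltoid_alt in H. destruct H as [t [Ht HZ]].
    rewrite HZ, deltoid_Wpt, K_C, KD_1. reflexivity.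
Qed.

Definition pD (x y : R) : R :=
  (1 - 6*(x*x+y*y) - 3*(x*x+y*y)*(x*x+y*y) + 8*(x*x*x - 3*x*y*y))/4.

Lemma cm (f g : R*R -> R) q : continuous f q -> continuous g q -> continuous (fun r => f r * g r) q.
Proof. intros. apply (continuous_mult (K:=R_AbsRing) f g); auto. Qed.
Lemma cp (f g : R*R -> R) q : continuous f q -> continuous g q -> continuous (fun r => f r + g r) q.
Proof. intros. apply (continuous_plus (K:=R_AbsRing) (V:=R_NormedModule) f g); auto. Qed.
Lemma cmi (f g : R*R -> R) q : continuous f q -> continuous g q -> continuous (fun r => f r - g r) q.
Proof. intros. apply (continuous_minus (K:=R_AbsRing) (V:=R_NormedModule) f g); auto. Qed.
Lemma co (f : R*R -> R) q : continuous f q -> continuous (fun r => - f r) q.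
Proof. intros. apply (continuous_opp (K:=R_AbsRing) (V:=R_NormedModule) f); auto. Qed.
Lemma cf (q : R*R) : continuous (fun r : R*R => fst r) q.
Proof. destruct q. apply continuous_fst. Qed.
Lemma cs (q : R*R) : continuous (fun r : R*R => snd r) q.
Proof. destruct q. apply continuous_snd. Qed.
Lemma cc (q : R*R) (a:R) : continuous (fun r : R*R => a) q.
Proof. apply continuous_const. Qed.
Lemma cpD q : continuous (fun r : R*R => pD (fst r) (snd r)) q.
Proof. unfold pD, Rdiv. destruct q as [x0 y0].
  repeat match goal with
  | |- continuous (fun r => _ * _) _ => apply cm
  | |- continuous (fun r => _ + _) _ => apply cp
  | |- continuous (fun r => _ - _) _ => apply cmi
  | |- continuous (fun r => - _) _ => apply co
  | |- continuous (fun r => fst r) _ => apply cf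
  | |- continuous (fun r => snd r) _ => apply cs
  | |- continuous fst _ => apply continuous_fst
  | |- continuous snd _ => apply continuous_snd
  | |- continuous (fun r => _) _ => apply cc
  end.
Qed.
Lemma cpD_eps x y e : 0 < e -> exists d, 0 < d /\ forall x' y', Rabs (x' - x) < d -> Rabs (y' - y) < d -> Rabs (pD x' y' - pD x y) < e.
Proof.
  intro He. pose proof (cpD (x,y)) as H. unfold continuous in H.
  specialize (H (ball (pD x y) e)). 
  destruct (H (locally_ball _ (mkposreal e He))) as [d Hd].
  exists d. split. apply cond_pos. intros x' y' H1 H2.
  specialize (Hd (x',y')). simpl in Hd. apply Hd. split; simpl; assumption.
Qed.

Lemma Dc_gen (Z : C) : Dc Z = RtoC (pD (fst Z) (snd Z)).
Proof.
  destruct Z as [x y]. unfold Dc, GammaZZb, GammaZZ, GammaZbZb, pD. cunf.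
  f_equal; field.
Qed.

Lemma Cmod_fst (z : C) : Rabs (fst z) <= Cmod z.
Proof. pose proof (Rmax_Cmod z). pose proof (Rmax_l (Rabs (fst z)) (Rabs (snd z))). lra. Qed.
Lemma Cmod_snd (z : C) : Rabs (snd z) <= Cmod z.
Proof. pose proof (Rmax_Cmod z). pose proof (Rmax_r (Rabs (fst z)) (Rabs (snd z))). lra. Qed.

Lemma pD_near (Z : C) e : 0 < e -> exists d, 0 < d /\ forall w : C, Cmod (w - Z) < d ->
  Rabs (pD (fst w) (snd w) - pD (fst Z) (snd Z)) < e.
Proof.
  intro He. destruct (cpD_eps (fst Z) (snd Z) e He) as [d [Hd H]].
  exists d. split; auto. intros w Hw. apply H.
  - pose proof (Cmod_fst (w - Z)). destruct w, Z. cunf. simpl in *. unfold Rminus. lra.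
  - pose proof (Cmod_snd (w - Z)). destruct w, Z. cunf. simpl in *. unfold Rminus. lra.
Qed.

Lemma image_nonneg Z : in_image Z -> 0 <= pD (fst Z) (snd Z).
Proof.
  intros [a [b HZ]]. destruct (image_D a b) as [p [c [Hc HW]]].
  pose proof (K_C p c) as H. rewrite <- HW, HZ, Dc_gen in H. apply RtoC_inj' in H.
  rewrite H. apply KD_nonneg; auto.
Qed.

Lemma open_pos Z : 0 < pD (fst Z) (snd Z) -> OmegaD Z.
Proof.
  intro HP. destruct (pD_near Z (pD (fst Z) (snd Z)) HP) as [d [Hd H]].
  exists d. split; auto. intros w Hw. specialize (H w Hw).
  apply Rabs_def2 in H.
  destruct (surj w) as [p [c [_ [Hc HW]]]].
  { rewrite Dc_gen. simpl. lra. }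
  rewrite HW. apply Wpt_image; auto.
Qed.

Lemma push_out x y s : pD x y = 0 -> 0 < s -> pD ((1+s)*x) ((1+s)*y) < 0.
Proof.
  intros H0 Hs.
  set (R0 := x*x+y*y).
  assert (HR : 0 < R0).
  { unfold R0. destruct (Req_dec x 0) as [Ex|Ex].
    - destruct (Req_dec y 0) as [Ey|Ey].
      + subst. unfold pD in H0. lra.
      + assert (0 < y*y) by (apply Rsqr_pos_lt; auto). nra.
    - assert (0 < x*x) by (apply Rsqr_pos_lt; auto). nra. }
  assert (E : 4 * pD ((1+s)*x) ((1+s)*y) = (1+s)*(1+s)*(1+s)*(4 * pD x y)
    - s * (3 * ((1-R0) + s*(1-3*R0)/2) * ((1-R0) + s*(1-3*R0)/2)
           + s*s*(1-3*R0)*(1-3*R0)/4 + 3*R0*R0*s*s*s)).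
  { unfold pD, R0. field. }
  rewrite H0 in E.
  assert (0 < 3*R0*R0*s*s*s).
  { repeat apply Rmult_lt_0_compat; lra. }
  assert (0 <= ((1-R0) + s*(1-3*R0)/2) * ((1-R0) + s*(1-3*R0)/2)) by apply Rle_0_sqr.
  assert (0 <= s*s*(1-3*R0)*(1-3*R0)/4).
  { assert (0 <= (s*(1-3*R0))*(s*(1-3*R0))) by apply Rle_0_sqr. nra. }
  assert (0 < s * (3 * ((1-R0) + s*(1-3*R0)/2) * ((1-R0) + s*(1-3*R0)/2)
           + s*s*(1-3*R0)*(1-3*R0)/4 + 3*R0*R0*s*s*s)).
  { apply Rmult_lt_0_compat; lra. }
  lra.
Qed.

Lemma part1 Z : OmegaD Z -> Im (Dc Z) = 0 /\ 0 < Re (Dc Z).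
Proof.
  intros HO. rewrite Dc_gen. simpl. split; [reflexivity|].
  destruct HO as [eps [He Hb]].
  assert (H0 : 0 <= pD (fst Z) (snd Z)).
  { apply image_nonneg, Hb. replace (Z - Z)%C with (RtoC 0).
    rewrite Cmod_0. auto. destruct Z; cunf; f_equal; ring. }
  destruct H0 as [H0|H0]; auto. exfalso.
  pose proof (Cmod_ge_0 Z).
  set (s := eps / (2 * (1 + Cmod Z))).
  assert (Hs : 0 < s). { unfold s. apply Rdiv_lt_0_compat; lra. }
  set (w := ((1+s) * fst Z, (1+s) * snd Z) : C).
  assert (Hw : Cmod (w - Z) < eps).
  { replace (w - Z)%C with (RtoC s * Z)%C.
    2:{ unfold w. destruct Z; cunf; f_equal; ring. }
    rewrite Cmod_mult, Cmod_R, Rabs_pos_eq by lra.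
    assert (s * Cmod Z <= s * (1 + Cmod Z)) by nra.
    assert (s * (1 + Cmod Z) = eps / 2) by (unfold s; field; lra). lra. }
  pose proof (image_nonneg w (Hb w Hw)) as Hn.
  pose proof (push_out (fst Z) (snd Z) s (eq_sym H0) Hs) as Hp.
  unfold w in Hn. simpl in Hn. lra.
Qed.

Lemma Cmod_expi p : Cmod (Cexpi p) = 1.
Proof. unfold Cmod, Cexpi. simpl fst; simpl snd. rewrite <- sqrt_1. f_equal.
  rewrite <- (sin2_cos2 p). unfold Rsqr. ring. Qed.

Lemma pD_zero_of_deltoid Z : deltoid Z -> pD (fst Z) (snd Z) = 0.
Proof. intro H. apply D0_iff in H. rewrite Dc_gen in H. apply RtoC_inj' in H. auto. Qed.

Lemma part3 Z : deltoid Z <-> boundary_OmegaD Z.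
Proof.
  split.
  - intro Hd. pose proof (pD_zero_of_deltoid Z Hd) as H0. split.
    + intros eps He.
      apply deltoid_alt in Hd. destruct Hd as [t [_ HZ]]. rewrite deltoid_Wpt in HZ.
      set (p := -t) in *.
      set (d := Rmin (1/2) (eps/2)).
      assert (Hd1 : 0 < d) by (unfold d; apply Rmin_pos; lra).
      assert (Hd2 : d <= 1/2) by (unfold d; apply Rmin_l).
      assert (Hd3 : d <= eps/2) by (unfold d; apply Rmin_r).
      assert (Hc : exists c', 1 - d <= c' < 1 /\ c' <> cos (3*p)).
      { destruct (Req_dec (cos (3*p)) (1-d)) as [E|E].
        - exists (1 - d/2). split. lra. lra.
        - exists (1 - d). split. lra. auto. }
      destruct Hc as [c' [Hc1 Hc2]].
      exists (Wpt p c'). split.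
      * apply open_pos. pose proof (K_C p c') as HK. rewrite Dc_gen in HK.
        apply RtoC_inj' in HK. rewrite HK. unfold KD.
        assert (0 < (cos (3*p) - c') * (cos (3*p) - c')) by (apply Rsqr_pos_lt; lra).
        assert (0 < 1 - c'*c') by nra. 
        apply Rmult_lt_0_compat; [apply Rmult_lt_0_compat|]; lra.
      * rewrite HZ. replace (Wpt p c' - Wpt p 1)%C with (RtoC (2*(c'-1)/3) * Cexpi (-p))%C.
        2:{ unfold Wpt. rewrite Cexpi_neg. pose proof (Cexpi_nz p).
            unfold Rdiv. rewrite !RtoC_mult, RtoC_minus, RtoC_inv by lra. field. auto. }
        rewrite Cmod_mult, Cmod_R, Cmod_expi.
        rewrite Rabs_left1 by lra. lra.
    + intro HO. apply part1 in HO. destruct HO as [_ HO]. rewrite Dc_gen in HO. simpl in HO. lra.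
  - intros [Happ HnO]. apply D0_iff. rewrite Dc_gen. f_equal.
    destruct (Rtotal_order (pD (fst Z) (snd Z)) 0) as [Hn|[E|Hp]]; auto.
    + exfalso. destruct (pD_near Z (- pD (fst Z) (snd Z))) as [d [Hd H]]. lra.
      destruct (Happ d Hd) as [w [Hw1 Hw2]].
      specialize (H w Hw2). apply Rabs_def2 in H.
      apply part1 in Hw1. destruct Hw1 as [_ Hw1]. rewrite Dc_gen in Hw1. simpl in Hw1. lra.
    + exfalso. apply HnO. apply open_pos. auto.
Qed.

Lemma part_id a b : Dc (Zmap a b) =
        (- ((zk u1 a b - zk u2 a b) * (zk u1 a b - zk u2 a b)
            * ((zk u2 a b - zk u3 a b) * (zk u2 a b - zk u3 a b))
            * ((zk u3 a b - zk u1 a b) * (zk u3 a b - zk u1 a b)))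
         / (RtoC (2 ^ 2 * 3 ^ 3)))%C.
Proof.
  unfold Zmap, zk.
  assert (E : dot u3 a b = - (dot u1 a b + dot u2 a b)).
  { unfold dot, u1, u2, u3; simpl. field. }
  rewrite E, Cexpi_neg, Cexpi_add.
  pose proof (Cexpi_nz (dot u1 a b)). pose proof (Cexpi_nz (dot u2 a b)).
  replace (2 ^ 2 * 3 ^ 3) with 108 by (simpl; field).
  unfold Dc, GammaZZb, GammaZZ, GammaZbZb. conjs.
  field. repeat split; auto.
Qed.

Lemma dmul (f g : R -> R) x df dg : is_derive f x df -> is_derive g x dg ->
  is_derive (fun t => f t * g t) x (df * g x + f x * dg).
Proof. intros. apply (is_derive_mult (K:=R_AbsRing)); auto. intros; apply Rmult_comm. Qed.
Lemma dplus (f g : R -> R) x df dg : is_derive f x df -> is_derive g x dg ->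
  is_derive (fun t => f t + g t) x (df + dg).
Proof. intros. apply (is_derive_plus (K:=R_AbsRing) (V:=R_NormedModule)); auto. Qed.

Lemma rho_eq a b : rho a b = / sqrt (pD a b).
Proof. unfold rho. rewrite Dc_gen. reflexivity. Qed.

Definition PX x y := (- 12*x - 12*(x*x+y*y)*x + 24*(x*x-y*y))/4.
Definition PY x y := (-12*y - 12*(x*x+y*y)*y - 48*x*y)/4.

Lemma pD_dx x y : is_derive (fun t => pD t y) x (PX x y).
Proof. unfold pD. auto_derive; auto. unfold PX. field. Qed.
Lemma pD_dy x y : is_derive (fun t => pD x t) y (PY x y).
Proof. unfold pD. auto_derive; auto. unfold PY. field. Qed.

Lemma is_derive_val (f : R -> R) (x l l' : R) : is_derive f x l -> l = l' -> is_derive f x l'.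
Proof. intros H E. rewrite <- E. exact H. Qed.

Lemma rho_d (F : R -> R) (x d : R) : 0 < F x -> is_derive F x d ->
  is_derive (fun t => / sqrt (F t)) x (- d / (2 * F x) * / sqrt (F x)).
Proof.
  intros H HF. pose proof (sqrt_lt_R0 _ H) as Hs.
  pose proof (sqrt_sqrt _ (Rlt_le _ _ H)) as Hss.
  eapply is_derive_val.
  { apply (is_derive_inv (fun t => sqrt (F t))). apply is_derive_sqrt. exact HF. exact H. lra. }
  simpl. set (s := sqrt (F x)) in *. rewrite <- Hss. field. lra.
Qed.

Lemma rho_dx x y : 0 < pD x y -> is_derive (fun t => rho t y) x (- PX x y / (2 * pD x y) * rho x y).
Proof.
  intro H. apply is_derive_ext with (f := fun t => / sqrt (pD t y)).
  { intro t. rewrite rho_eq. reflexivity. }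
  rewrite rho_eq. apply (rho_d (fun t => pD t y)); auto. apply pD_dx.
Qed.
Lemma rho_dy x y : 0 < pD x y -> is_derive (fun t => rho x t) y (- PY x y / (2 * pD x y) * rho x y).
Proof.
  intro H. apply is_derive_ext with (f := fun t => / sqrt (pD x t)).
  { intro t. rewrite rho_eq. reflexivity. }
  rewrite rho_eq. apply (rho_d (fun t => pD x t)); auto. apply pD_dy.
Qed.

Definition G11 x y := (x - x*x + y*y + (1 - x*x - y*y)/2)/2.
Definition G22 x y := ((1 - x*x - y*y)/2 - x + x*x - y*y)/2.
Definition G12 x y := (-y - 2*x*y)/2.
Lemma g11_eq x y : g11 x y = G11 x y.
Proof. unfold g11, G11, GammaZZ, GammaZZb; cunf. field. Qed.
Lemma g22_eq x y : g22 x y = G22 x y.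
Proof. unfold g22, G22, GammaZZ, GammaZZb; cunf. field. Qed.
Lemma g12_eq x y : g12 x y = G12 x y.
Proof. unfold g12, G12, GammaZZ, GammaZZb; cunf. field. Qed.
Lemma b1_eq x y : b1 x y = -x.
Proof. unfold b1, LZ; simpl. reflexivity. Qed.
Lemma b2_eq x y : b2 x y = -y.
Proof. unfold b2, LZ; simpl. reflexivity. Qed.

Lemma dg11x x y : is_derive (fun t => g11 t y) x ((1 - 2*x - x)/2).
Proof. apply is_derive_ext with (f := fun t => G11 t y). intro; rewrite g11_eq; auto.
  unfold G11. auto_derive; auto. field. Qed.
Lemma dg12x x y : is_derive (fun t => g12 t y) x (- y).
Proof. apply is_derive_ext with (f := fun t => G12 t y). intro; rewrite g12_eq; auto.
  unfold G12. auto_derive; auto. field. Qed.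
Lemma dg12y x y : is_derive (fun t => g12 x t) y ((-1 - 2*x)/2).
Proof. apply is_derive_ext with (f := fun t => G12 x t). intro; rewrite g12_eq; auto.
  unfold G12. auto_derive; auto. field. Qed.
Lemma dg22y x y : is_derive (fun t => g22 x t) y ((-y - 2*y)/2).
Proof. apply is_derive_ext with (f := fun t => G22 x t). intro; rewrite g22_eq; auto.
  unfold G22. auto_derive; auto. field. Qed.

Lemma part5 (f : R -> R -> R) :
        (forall x y, ex_derive (fun t => f t y) x) ->
        (forall x y, ex_derive (fun t => f x t) y) ->
        (forall x y, ex_derive (fun t => dx f t y) x) ->
        (forall x y, ex_derive (fun t => dx f x t) y) ->
        (forall x y, ex_derive (fun t => dy f t y) x) ->
        (forall x y, ex_derive (fun t => dy f x t) y) ->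
        forall x y : R, OmegaD (x, y) -> Lop f x y = divform f x y.
Proof.
  intros H1 H2 H3 H4 H5 H6 x y HO.
  assert (Hp : 0 < pD x y).
  { apply part1 in HO. destruct HO as [_ HO]. rewrite Dc_gen in HO. exact HO. }
  pose proof (dmul _ _ x _ _ (rho_dx x y Hp)
     (dplus _ _ x _ _ (dmul _ _ x _ _ (dg11x x y) (Derive_correct _ _ (H3 x y)))
                      (dmul _ _ x _ _ (dg12x x y) (Derive_correct _ _ (H5 x y))))) as D1.
  pose proof (dmul _ _ y _ _ (rho_dy x y Hp)
     (dplus _ _ y _ _ (dmul _ _ y _ _ (dg12y x y) (Derive_correct _ _ (H4 x y)))
                      (dmul _ _ y _ _ (dg22y x y) (Derive_correct _ _ (H6 x y))))) as D2.
  cbv beta in D1, D2. unfold divform.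
  change (dx (fun a b => rho a b * (g11 a b * dx f a b + g12 a b * dy f a b)) x y)
    with (Derive (fun t : R_AbsRing => rho t y * (g11 t y * dx f t y + g12 t y * dy f t y)) x).
  change (dy (fun a b => rho a b * (g12 a b * dx f a b + g22 a b * dy f a b)) x y)
    with (Derive (fun t : R_AbsRing => rho x t * (g12 x t * dx f x t + g22 x t * dy f x t)) y).
  rewrite (is_derive_unique _ _ _ D1), (is_derive_unique _ _ _ D2).
  change (Derive (fun t : R_AbsRing => dx f t y) x) with (dx (dx f) x y).
  change (Derive (fun t : R_AbsRing => dy f t y) x) with (dx (dy f) x y).
  change (Derive (fun t : R_AbsRing => dx f x t) y) with (dy (dx f) x y).
  change (Derive (fun t : R_AbsRing => dy f x t) y) with (dy (dy f) x y).
  unfold Lop. rewrite !g11_eq, !g12_eq, !g22_eq, !b1_eq, !b2_eq.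
  assert (Hr : 0 < rho x y). { rewrite rho_eq. apply Rinv_0_lt_compat, sqrt_lt_R0. auto. }
  set (r := rho x y) in *.
  unfold PX, PY, G11, G12, G22. unfold pD in *.
  field. split; lra.
Qed.

Theorem proposition3p5 :
  (* (1) D > 0 on the deltoid domain (D is real there) *)
  (forall Z : Complex.C, OmegaD Z -> Im (Dc Z) = 0 /\ 0 < Re (Dc Z))
  (* (2) {D = 0} is the deltoid curve, i.e. the boundary of OmegaD *)
  /\ (forall Z : Complex.C, Dc Z = RtoC 0 <-> deltoid Z)
  /\ (forall Z : Complex.C, deltoid Z <-> boundary_OmegaD Z)
  (* (3) rho = D^{-1/2} is a reversible density: L f = rho^{-1} d_i(rho g^{ij} d_j f) *)
  /\ (forall f : R -> R -> R,
        (forall x y, ex_derive (fun t => f t y) x) ->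
        (forall x y, ex_derive (fun t => f x t) y) ->
        (forall x y, ex_derive (fun t => dx f t y) x) ->
        (forall x y, ex_derive (fun t => dx f x t) y) ->
        (forall x y, ex_derive (fun t => dy f t y) x) ->
        (forall x y, ex_derive (fun t => dy f x t) y) ->
        forall x y : R, OmegaD (x, y) -> Lop f x y = divform f x y)
  (* (4) D in terms of z_k = e^{i u_k . z} *)
  /\ (forall a b : R,
        Dc (Zmap a b) =
        (- ((zk u1 a b - zk u2 a b) * (zk u1 a b - zk u2 a b)
            * ((zk u2 a b - zk u3 a b) * (zk u2 a b - zk u3 a b))
            * ((zk u3 a b - zk u1 a b) * (zk u3 a b - zk u1 a b)))
         / (RtoC (2 ^ 2 * 3 ^ 3)))%C).
Proof.
  split; [exact part1|].
  split; [exact D0_iff|].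
  split; [exact part3|].
  split; [exact part5|].
  exact part_id.
Qed.
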